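(* Let $n\ge2$ be an integer. Then Hypothesis C holds for $\mathbf{GL}_n$: for every quasicharacter $\phi$ of $G=\mathbf{GL}_n(F)$ of positive depth $r$ and every $x\in\mathscr B(\mathbf{GL}_n,F)$, the restriction $\phi|_{G_{x,(r/2)^+}}$ is realized by an element of $\mathfrak z^*_{-r}$.
   Context: $F$ is a nonarchimedean local field of odd residual characteristic, valuation normalized by $v_F(F^\times)=\mathbb Z$, $\mathfrak O_F,\mathfrak P_F$ its integers and maximal ideal, $\psi$ a fixed character of $F$ trivial on $\mathfrak P_F$ and nontrivial on $\mathfrak O_F$. $G_{x,t}$, $\mathfrak g_{x,t}$ are Moy–Prasad subgroups and lattices, $G_{x,t^+}=\bigcup_{s>t}G_{x,s}$, $\mathfrak g^*_{x,t}=\{\lambda\in\mathfrak g^*:\lambda(\mathfrak g_{x,(-t)^+})\subset\mathfrak P_F\}$, $\mathfrak g^*_t=\bigcup_x\mathfrak g^*_{x,t}$; $\mathfrak z^*$ is the dual of the centre of $\mathfrak g$, viewed as the $\mathrm{Ad}^*G$-fixed elements of $\mathfrak g^*$ (the functionals $X\mapsto\beta\operatorname{tr}X$), and $\mathfrak z^*_t=\mathfrak z^*\cap\mathfrak g^*_t$. The depth of a quasicharacter $\phi$ is the least $r\ge0$ with $\phi|_{G_{x,r^+}}=1$ for some (equivalently all) $x$. For $r>0$, $e:\mathfrak g_{x,(r/2)^+}/\mathfrak g_{x,r^+}\to G_{x,(r/2)^+}/G_{x,r^+}$ is Yu's canonical (Moy–Prasad) isomorphism; $\phi|_{G_{x,(r/2)^+}}$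 is realized by $X^*\in\mathfrak g^*$ if $\phi(e(Y+\mathfrak g_{x,r^+}))=\psi(X^*(Y))$ for all $Y\in\mathfrak g_{x,(r/2)^+}$. *)

(* Defs.v *)
From HB Require Import structures.
From mathcomp Require Import all_boot all_order all_algebra.
From mathcomp Require Import reals complex.
Set Implicit Arguments. Unset Strict Implicit. Unset Printing Implicit Defensive.
Import Order.TTheory GRing.Theory Num.Theory.
Local Open Scope ring_scope.

Section LocalField.
Variable F : fieldType.
(* v : normalized discrete valuation on F^x (value at 0 is irrelevant) *)
Variable v : F -> int.

(* x \in P_F^k  (with v(0) = +oo) *)
Definition inPk (k : int) (x : F) : Prop := x = 0 \/ k <= v x.
Definition inO (x : F) : Prop := inPk 0 x.
Definition inP (x : F) : Prop := inPk 1 x.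

Definition is_nonarch_local_field : Prop :=
  (forall x y, x != 0 -> y != 0 -> v (x * y) = v x + v y) /\ [/\ (forall x y, x != 0 -> y != 0 -> x + y != 0 -> Num.min (v x) (v y) <= v (x + y)),
      (exists pi : F, pi != 0 /\ v pi = 1),
      (forall u : nat -> F,
          (forall k : int, exists N, forall m p, (N <= m)%N -> (N <= p)%N -> inPk k (u m - u p)) ->
          (exists l, forall k : int, exists N, forall m, (N <= m)%N -> inPk k (u m - l))),
      (* finite residue field O_F / P_F *)
      (exists s : seq F, (forall a, a \in s -> inO a) /\
                          forall x, inO x -> exists2 a, a \in s & inP (x - a)) &
      (* odd residual characteristic: 2 is a unit of O_F *)
      ((2 : F) != 0 /\ v 2 = 0) ].

Variable C : numClosedFieldType.

Definition is_level_one_char (psi : F -> C) : Prop :=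
  [/\ (forall x y, psi (x + y) = psi x * psi y),
      (forall x, psi x != 0),
      (forall x, inP x -> psi x = 1) &
      (exists x, inO x /\ psi x != 1)].

Variable n : nat.
Variable R : realType.

(* A point of the building B(GL_n, F), given by an apartment (a basis of F^n,
   the columns of B) and real coordinates a; its (additive) norm is
   alpha(sum_i c_i b_i) = min_i (v c_i + a_i). *)
Record bpoint := BPoint { bbasis : 'M[F]_n ; bcoord : 'I_n -> R }.

Definition is_bpoint (x : bpoint) : Prop := bbasis x \in unitmx.

(* Lattice function: Lambda_x(s) = { w in F^n : alpha_x(w) >= s } *)
Definition lattice (x : bpoint) (s : R) (w : 'cV[F]_n) : Prop :=
  let c := invmx (bbasis x) *m w in
  forall i : 'I_n, c i 0 = 0 \/ s <= (v (c i 0))%:~R + bcoord x i.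

Definition mp_lie (x : bpoint) (t : R) (X : 'M[F]_n) : Prop :=
  forall (s : R) (w : 'cV[F]_n), lattice x s w -> lattice x (s + t) (X *m w).

Definition mp_lie_plus (x : bpoint) (t : R) (X : 'M[F]_n) : Prop :=
  exists2 s, t < s & mp_lie x s X.

Definition mp_grp (x : bpoint) (t : R) (g : 'M[F]_n) : Prop :=
  g \in unitmx /\ mp_lie x t (g - 1).
Definition mp_grp_plus (x : bpoint) (t : R) (g : 'M[F]_n) : Prop :=
  exists2 s, t < s & mp_grp x s g.

(* quasicharacter of GL_n(F) (a homomorphism GL_n(F) -> C^x; values off
   GL_n(F) are irrelevant) *)
Definition is_hom (phi : 'M[F]_n -> C) : Prop :=
  (forall g, g \in unitmx -> phi g != 0) /\
  (forall g h, g \in unitmx -> h \in unitmx -> phi (g * h) = phi g * phi h).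

Definition trivial_on (phi : 'M[F]_n -> C) (S : 'M[F]_n -> Prop) : Prop :=
  forall g, S g -> phi g = 1.

Definition has_depth (phi : 'M[F]_n -> C) (r : R) : Prop :=
  [/\ 0 <= r,
      (exists x, is_bpoint x /\ trivial_on phi (mp_grp_plus x r)) &
      (forall r', 0 <= r' -> r' < r ->
         forall x, is_bpoint x -> ~ trivial_on phi (mp_grp_plus x r'))].

Definition in_gstar_x (x : bpoint) (t : R) (lam : 'M[F]_n -> F) : Prop :=
  forall X, mp_lie_plus x (- t) X -> inP (lam X).
Definition in_gstar (t : R) (lam : 'M[F]_n -> F) : Prop :=
  exists x, is_bpoint x /\ in_gstar_x x t lam.

Definition zstar (beta : F) : 'M[F]_n -> F := fun X => beta * \tr X.

(* phi|_{G_{x,(r/2)+}} is realized by lam : for GL_n Yu's isomorphism e is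
   Y + g_{x,r+} |-> (1 + Y) G_{x,r+} *)
Definition realizes (psi : F -> C) (phi : 'M[F]_n -> C) (x : bpoint) (r : R)
    (lam : 'M[F]_n -> F) : Prop :=
  forall Y, mp_lie_plus x (r / 2) Y -> phi (1 + Y) = psi (lam Y).

End LocalField.

(* Main.v *)
Require Import Defs.
From HB Require Import structures.
From mathcomp Require Import all_boot all_order all_algebra.
From mathcomp Require Import reals complex.
From mathcomp Require Import fingroup perm.
From mathcomp Require Import zify ring lra.
From Stdlib Require Import ClassicalEpsilon.
Import Order.TTheory GRing.Theory Num.Theory.
Local Open Scope ring_scope.
Set Implicit Arguments. Unset Strict Implicit. Unset Printing Implicit Defensive.

Section GrpPart.
Variables (F C : fieldType) (m : nat).
Local Notation n := m.+1.
Variable phi : 'M[F]_n -> C.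
Hypothesis phi_nz : forall g, g \in unitmx -> phi g != 0.
Hypothesis phiM : forall g h, g \in unitmx -> h \in unitmx -> phi (g * h) = phi g * phi h.
Hypothesis two_nz : (2:F) != 0.

Lemma unit1mx : (1%:M : 'M[F]_n) \in unitmx.
Proof. by rewrite unitmxE det1 unitr1. Qed.

Lemma phi1 : phi 1%:M = 1.
Proof.
have h := phiM unit1mx unit1mx. rewrite -[1%:M]/(1 : 'M[F]_n) mul1r in h.
have nz := phi_nz unit1mx.
by apply: (mulfI nz); rewrite -h mulr1.
Qed.

Lemma phiMm g h : g \in unitmx -> h \in unitmx -> phi (g *m h) = phi g * phi h.
Proof. by move=> *; rewrite mulmxE phiM. Qed.

Lemma phiV g : g \in unitmx -> phi (invmx g) * phi g = 1.
Proof.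
move=> ug; rewrite -phiMm ?unitmx_inv // mulVmx // phi1 //.
Qed.

Definition ej (j : 'I_n) : 'rV[F]_n := delta_mx 0 j.
Definition Tm (j : 'I_n) (a : 'cV[F]_n) : 'M[F]_n := 1%:M + a *m ej j.

Lemma e_mul0 j (a : 'cV[F]_n) : a j 0 = 0 -> ej j *m a = 0.
Proof.
move=> a0; rewrite /ej -rowE; apply/matrixP => i k; rewrite !mxE.
by rewrite !ord1.
Qed.

Lemma TmM j (a b : 'cV[F]_n) : b j 0 = 0 -> Tm j a *m Tm j b = Tm j (a + b).
Proof.
move=> b0; rewrite /Tm mulmxDl mul1mx mulmxDr mulmx1 -!mulmxA (mulmxA (ej j)) e_mul0 //.
by rewrite mul0mx mulmx0 addr0 mulmxDl addrAC addrA.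
Qed.

Lemma Tm0 j : Tm j 0 = 1%:M.
Proof. by rewrite /Tm mul0mx addr0. Qed.

Lemma Tm_unit j (a : 'cV[F]_n) : a j 0 = 0 -> Tm j a \in unitmx.
Proof.
move=> a0; have : Tm j a *m Tm j (- a) = 1%:M.
  by rewrite TmM ?subrr ?Tm0 // mxE a0 oppr0.
by case/mulmx1_unit.
Qed.

Definition Dg (j : 'I_n) (c : F) : 'M[F]_n := diag_mx (\row_i (if i == j then c else 1)).

Lemma DgM j c d : Dg j c *m Dg j d = Dg j (c * d).
Proof.
rewrite /Dg mulmx_diag; congr diag_mx; apply/rowP => i; rewrite !mxE.
by case: (i == j); rewrite ?mulr1.
Qed.

Lemma Dg1 j : Dg j 1 = 1%:M.
Proof.
apply/matrixP => i k; rewrite !mxE; case: (i == j) => //.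
Qed.

Lemma detDg j c : \det (Dg j c) = c.
Proof.
rewrite det_diag (bigD1 j) //= big1 ?mulr1 ?mxE ?eqxx //.
by move=> i /negbTE ij; rewrite mxE ij.
Qed.

Lemma Dg_unit j c : c != 0 -> Dg j c \in unitmx.
Proof. by move=> c0; rewrite unitmxE detDg unitfE. Qed.


Lemma Dg_conj j (b : 'cV[F]_n) (t : F) : t != 0 -> b j 0 = 0 ->
  Dg j t *m Tm j b *m Dg j t^-1 = Tm j (t^-1 *: b).
Proof.
move=> t0 b0; rewrite /Tm mulmxDr mulmx1 mulmxDl DgM mulfV // Dg1.
congr (_ + _); rewrite mulmxA.
have -> : Dg j t *m b = b.
  rewrite /Dg mul_diag_mx; apply/matrixP => i k; rewrite !mxE ord1.
  by case: eqP => [->|_]; rewrite ?b0 ?mulr0 ?mul1r.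
rewrite -mulmxA; have -> : ej j *m Dg j t^-1 = t^-1 *: ej j.
  rewrite /Dg mul_mx_diag; apply/matrixP => i k; rewrite !mxE.
  by case: (k == j); rewrite ?andbT ?andbF ?mulr0 ?mul0r ?mulr1 // mulrC.
by rewrite -scalemxAr scalemxAl.
Qed.

Lemma half_neq1 : (2:F)^-1 - 1 != 0.
Proof.
rewrite subr_eq0; apply/negP => /eqP h.
have : (2:F) = 1 by rewrite -[2]invrK h invr1.
move/eqP; rewrite -subr_eq0 -[2]/(1+1) addrK; exact/negP/oner_neq0.
Qed.

Lemma Tm_comm j (a : 'cV[F]_n) : a j 0 = 0 ->
  let b := ((2:F)^-1 - 1)^-1 *: a in
  Tm j a = (Dg j 2 *m Tm j b *m Dg j 2^-1) *m Tm j (- b).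
Proof.
move=> a0 b; have b0 : b j 0 = 0 by rewrite mxE a0 mulr0.
rewrite Dg_conj // TmM; last by rewrite mxE b0 oppr0.
congr Tm; rewrite -{2}[b]scale1r -scalerBl /b scalerA.
by rewrite mulfV ?scale1r // half_neq1.
Qed.

Lemma phiTm j (a : 'cV[F]_n) : a j 0 = 0 -> phi (Tm j a) = 1.
Proof.
move=> a0; rewrite (Tm_comm a0); set b := _ *: a.
have b0 : b j 0 = 0 by rewrite mxE a0 mulr0.
have nb0 : (- b) j 0 = 0 by rewrite mxE b0 oppr0.
have u2 : Dg j 2 \in unitmx by apply: Dg_unit.
have u2' : Dg j 2^-1 \in unitmx by apply: Dg_unit; rewrite invr_eq0.
have ub := Tm_unit b0; have unb := Tm_unit nb0.
rewrite !phiMm ?unitmx_mul ?u2 ?ub ?u2' ?unb //.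
have e1 : phi (Dg j 2) * phi (Dg j 2^-1) = 1.
  by rewrite -phiMm // DgM mulfV // Dg1 phi1.
have e2 : phi (Tm j b) * phi (Tm j (-b)) = 1.
  by rewrite -phiMm // TmM // subrr Tm0 phi1.
by rewrite (mulrC (phi (Dg j 2))) -(mulrA (phi (Tm j b))) e1 mulr1 e2.
Qed.

Lemma detTm j (a : 'cV[F]_n) : a j 0 = 0 -> \det (Tm j a) = 1.
Proof.
move=> a0; rewrite (Tm_comm a0); set b := _ *: a.
have b0 : b j 0 = 0 by rewrite mxE a0 mulr0.
rewrite !mulmxE !detM !detDg (mulrC 2) -(mulrA _ 2) mulfV // mulr1 -detM.
rewrite -mulmxE TmM; last by rewrite mxE b0 oppr0.
by rewrite subrr Tm0 det1.
Qed.


Lemma tperm_mx2 (i j : 'I_n) : tperm_mx i j *m tperm_mx i j = 1%:M :> 'M[F]_n.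
Proof. by rewrite -perm_mxM tperm2 perm_mx1. Qed.

Lemma Dg_perm j c : tperm_mx 0 j *m Dg j c *m tperm_mx 0 j = Dg 0 c.
Proof.
apply/matrixP => i k; rewrite -xrowE -xcolE !mxE.
rewrite (inj_eq (@perm_inj _ _)); congr (_ *+ _).
have -> : (tperm 0 j i == j) = (i == 0).
  by rewrite -[X in _ == X](tpermL 0 j) (inj_eq (@perm_inj _ _)).
by [].
Qed.

Definition chi (c : F) := phi (Dg 0 c).

Lemma phiDg j c : c != 0 -> phi (Dg j c) = chi c.
Proof.
move=> c0; rewrite /chi -(Dg_perm j).
have [uP _] := mulmx1_unit (tperm_mx2 0 j).
rewrite !phiMm ?unitmx_mul ?uP ?Dg_unit //.
by rewrite mulrAC -phiMm // tperm_mx2 phi1 mul1r.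
Qed.

Lemma chiM c d : c != 0 -> d != 0 -> chi (c * d) = chi c * chi d.
Proof. by move=> c0 d0; rewrite /chi -DgM phiMm ?Dg_unit. Qed.

Lemma chi_nz c : c != 0 -> chi c != 0.
Proof. by move=> c0; apply: phi_nz; apply: Dg_unit. Qed.

Lemma chi1 : chi 1 = 1.
Proof. by rewrite /chi Dg1 phi1. Qed.


Lemma TmmulE j (a : 'cV[F]_n) (g : 'M[F]_n) r s :
  (Tm j a *m g) r s = g r s + a r 0 * g j s.
Proof.
rewrite /Tm mulmxDl mul1mx -mulmxA /ej -rowE mxE; congr (_ + _).
by rewrite mxE big_ord1 !mxE.
Qed.

Lemma mulDgE j c (g : 'M[F]_n) r s :
  (g *m Dg j c) r s = g r s * (if s == j then c else 1).
Proof. by rewrite /Dg mul_mx_diag !mxE. Qed.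

Lemma sum_delta (P : pred 'I_n) (f : 'I_n -> F) i :
  \sum_(l | P l) f l * (i == l)%:R = if P i then f i else 0.
Proof.
rewrite big_mkcond (bigD1 i) //= big1 ?addr0 ?eqxx ?mulr1 //.
by move=> l /negbTE li; rewrite eq_sym li mulr0; case: (P l).
Qed.

Lemma pivot_exists (k : nat) (kk : 'I_n) (g : 'M[F]_n) : kk = k :> nat ->
  g \in unitmx -> (forall i (j : 'I_n), (j < k)%N -> g i j = (i == j)%:R) ->
  exists i : 'I_n, (k <= i)%N /\ g i kk != 0.
Proof.
move=> ekk ug gst.
have [i /andP[H1 H2]|none] := pickP [pred i : 'I_n | (k <= i)%N && (g i kk != 0)].
  by exists i.
exfalso.
pose w : 'cV[F]_n := \col_l ((l == kk)%:R + (if (l < k)%N then - g l kk else 0)).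
have gw : g *m w = 0.
  apply/matrixP => i z; rewrite ord1 !mxE.
  under eq_bigr => l _ do rewrite mxE mulrDr.
  rewrite big_split /= (eq_bigr (fun l : 'I_n => g i l * (kk == l)%:R)); last first.
    by move=> l _; rewrite eq_sym.
  rewrite sum_delta.
  rewrite (eq_bigr (fun l : 'I_n => if (l < k)%N then (- g l kk) * (i == l)%:R else 0)); last first.
    move=> l _; case: ifP => lk; last by rewrite mulr0.
    by rewrite gst // mulrC.
  rewrite -big_mkcond /= sum_delta.
  case: ifP => ik; first by rewrite subrr.
  move/negbT: (none i); rewrite /= leqNgt ik /= negbK => /eqP ->.
  by rewrite addr0.
have : w = 0 by rewrite -(mulKmx ug w) gw mulmx0.
move/matrixP/(_ kk 0); rewrite !mxE eqxx ekk ltnn addr0.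
by move/eqP; rewrite oner_eq0.
Qed.


Lemma phi_det_aux d : forall k, (k + d = n)%N -> forall g : 'M[F]_n, g \in unitmx ->
  (forall i (j : 'I_n), (j < k)%N -> g i j = (i == j)%:R) -> phi g = chi (\det g).
Proof.
elim: d => [|d IH] k hk g ug gst.
  have -> : g = 1%:M.
    apply/matrixP => i j; rewrite mxE gst //; rewrite addn0 in hk; by rewrite hk.
  by rewrite phi1 det1 chi1.
have kn : (k < n)%N by rewrite -hk addnS ltnS leq_addr.
pose kk := Ordinal kn.
have [i [ki gi]] := @pivot_exists k kk g (erefl _) ug gst.
have [g1 [ug1 g1st g1kk phig1 detg1]] : exists g1 : 'M[F]_n,
   [/\ g1 \in unitmx, (forall i (j:'I_n), (j < k)%N -> g1 i j = (i == j)%:R),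
       g1 kk kk != 0, phi g1 = phi g & \det g1 = \det g].
  case: (eqVneq (g kk kk) 0) => gkk; last by exists g.
  have ik : i != kk by apply: contraNneq gi => ->; rewrite gkk.
  pose a : 'cV[F]_n := delta_mx kk 0.
  have a0 : a i 0 = 0 by rewrite mxE (negbTE ik).
  exists (Tm i a *m g); split.
  - by rewrite unitmx_mul Tm_unit.
  - move=> r j jk; rewrite TmmulE gst // (gst i j jk).
    have -> : (i == j) = false.
      by apply/negbTE/eqP => eij; move: jk; rewrite -eij ltnNge ki.
    by rewrite mulr0 addr0.
  - by rewrite TmmulE gkk add0r mxE !eqxx /= mul1r.
  - by rewrite phiMm ?Tm_unit // phiTm // mul1r.
  - by rewrite mulmxE detM detTm // mul1r.
set c := g1 kk kk.
pose a : 'cV[F]_n := \col_l (if l == kk then 0 else - g1 l kk / c).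
have a0 : a kk 0 = 0 by rewrite mxE eqxx.
have ci : c^-1 != 0 by rewrite invr_eq0.
pose g3 := (Tm kk a *m g1) *m Dg kk c^-1.
have ug3 : g3 \in unitmx by rewrite !unitmx_mul Tm_unit ?ug1 ?Dg_unit.
have g3st : forall i (j : 'I_n), (j < k.+1)%N -> g3 i j = (i == j)%:R.
  move=> r j; rewrite ltnS leq_eqVlt => /orP[/eqP ejk|jk]; rewrite mulDgE TmmulE.
    have -> : j = kk by apply: val_inj.
    rewrite ifT // mxE; case: (eqVneq r kk) => [->|rk].
      by rewrite mul0r addr0 mulfV.
    by rewrite -/c mulfVK // addrN mul0r.
  have -> : (j == kk) = false.
    by apply/negbTE/eqP => ejk; move: jk; rewrite ejk ltnn.
  rewrite mulr1 g1st // (g1st kk j jk).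
  have -> : (kk == j) = false.
    by apply/negbTE/eqP => ejk; move: jk; rewrite -ejk ltnn.
  by rewrite mulr0 addr0.
have := IH k.+1 _ g3 ug3 g3st; rewrite addSn -addnS => /(_ hk).
have dg1 : \det g1 != 0 by rewrite -unitfE -unitmxE.
have uT := Tm_unit a0; have uD := Dg_unit kk ci.
rewrite /g3 (phiMm _ uD) ?unitmx_mul ?uT // (phiMm uT ug1) phiTm // mul1r phiDg //.
rewrite !mulmxE !detM detTm // mul1r detDg chiM // => /mulIf; rewrite -phig1 -detg1.
by apply; apply: chi_nz.
Qed.

Lemma phi_det g : g \in unitmx -> phi g = chi (\det g).
Proof. by move=> ug; apply: (@phi_det_aux n 0) => // i j; rewrite ltn0. Qed.


Lemma phi_conj (B g : 'M[F]_n) : B \in unitmx -> g \in unitmx ->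
  phi (B *m g *m invmx B) = phi g.
Proof.
move=> uB ug; rewrite !phi_det ?unitmx_mul ?uB ?ug ?unitmx_inv //.
by rewrite !mulmxE !detM det_inv mulrC mulrA mulVf ?mul1r // -unitfE -unitmxE.
Qed.

End GrpPart.

Lemma int_dbl (x : int) : x = x + x -> x = 0.
Proof. lia. Qed.
Lemma int_dbl0 (x : int) : 0 = x + x -> x = 0.
Proof. lia. Qed.
Lemma int_opp (x y : int) : 0 = x + y -> y = - x.
Proof. lia. Qed.

Lemma ih1 (J M : int) (d : nat) : J <= M - d.+1%:Z -> J <= M - d%:Z.
Proof. lia. Qed.
Lemma ih2 (M : int) (d : nat) : M - d.+1%:Z + 1 = M - d%:Z.
Proof. lia. Qed.
Lemma ih3 (M : int) (d : nat) : 1 - M <= - (M - d.+1%:Z).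
Proof. lia. Qed.
Lemma ih4 (J M : int) : J <= M -> M - (`|M - J|%N)%:Z = J.
Proof. lia. Qed.

Lemma ih5 (J : int) : 0 <= J -> J + J <= J + (J + J).
Proof. lia. Qed.

Section Val.
Variables (F : fieldType) (v : F -> int).
Hypothesis vM : forall x y, x != 0 -> y != 0 -> v (x * y) = v x + v y.
Hypothesis vD : forall x y, x != 0 -> y != 0 -> x + y != 0 ->
  Num.min (v x) (v y) <= v (x + y).

Local Notation Pk := (inPk v).

Lemma v1 : v 1 = 0.
Proof.
have := vM (oner_neq0 F) (oner_neq0 F); rewrite mulr1; exact: int_dbl.
Qed.

Lemma vN1 : v (-1) = 0.
Proof.
have n1 : (-1 : F) != 0 by rewrite oppr_eq0 oner_neq0.
have := vM n1 n1; rewrite mulrNN mulr1 v1; exact: int_dbl0.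
Qed.

Lemma vN x : v (- x) = v x.
Proof.
case: (eqVneq x 0) => [->|x0]; first by rewrite oppr0.
by rewrite -mulN1r vM ?oppr_eq0 ?oner_neq0 // vN1 add0r.
Qed.

Lemma vV x : x != 0 -> v x^-1 = - v x.
Proof.
move=> x0; have := vM x0 (invr_neq0 x0); rewrite mulfV // v1; exact: int_opp.
Qed.


Lemma Pk0 k : Pk k 0.
Proof. by left. Qed.

Lemma PkD k x y : Pk k x -> Pk k y -> Pk k (x + y).
Proof.
case=> [->|hx]; first by rewrite add0r.
case=> [->|hy]; first by rewrite addr0; right.
case: (eqVneq x 0) => [->|x0]; first by rewrite add0r; right.
case: (eqVneq y 0) => [->|y0]; first by rewrite addr0; right.
case: (eqVneq (x + y) 0) => [->|s0]; first by left.
right; apply: le_trans (vD x0 y0 s0); by rewrite le_min hx hy.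
Qed.

Lemma PkN k x : Pk k x -> Pk k (- x).
Proof. by case=> [->|h]; [left; rewrite oppr0 | right; rewrite vN]. Qed.

Lemma PkB k x y : Pk k x -> Pk k y -> Pk k (x - y).
Proof. by move=> hx hy; apply: PkD hx (PkN hy). Qed.

Lemma PkM a b x y : Pk a x -> Pk b y -> Pk (a + b) (x * y).
Proof.
case=> [->|hx]; first by rewrite mul0r; left.
case=> [->|hy]; first by rewrite mulr0; left.
case: (eqVneq x 0) => [->|x0]; first by rewrite mul0r; left.
case: (eqVneq y 0) => [->|y0]; first by rewrite mulr0; left.
by right; rewrite vM // lerD.
Qed.

Lemma Pk_le a b x : a <= b -> Pk b x -> Pk a x.
Proof. by move=> ab [->|h]; [left | right; apply: le_trans h]. Qed.

Lemma Pk_sum k (I : Type) (r : seq I) (P : pred I) (f : I -> F) :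
  (forall i, P i -> Pk k (f i)) -> Pk k (\sum_(i <- r | P i) f i).
Proof.
move=> h; elim/big_rec: _ => [|i x Pi hx]; first exact: Pk0.
by apply: PkD => //; apply: h.
Qed.

Lemma Pk_v x : x != 0 -> Pk (v x) x.
Proof. by move=> _; right. Qed.

Lemma Pk_nz k x : x != 0 -> Pk k x -> k <= v x.
Proof. by move=> x0 [h|//]; move: x0; rewrite h eqxx. Qed.

Lemma PkX k x (m : nat) : Pk k x -> Pk (k *+ m) (x ^+ m).
Proof.
move=> h; elim: m => [|m IH]; first by right; rewrite expr0 mulr0n v1.
by rewrite exprS mulrS; apply: PkM.
Qed.


Definition congb (x y : F) : bool :=
  if excluded_middle_informative (Pk 1 (x - y)) then true else false.

Lemma congP x y : reflect (Pk 1 (x - y)) (congb x y).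
Proof. by rewrite /congb; case: excluded_middle_informative => h; constructor. Qed.

Lemma cong_sym x y : congb x y -> congb y x.
Proof. by move/congP/PkN; rewrite opprB => h; apply/congP. Qed.

Lemma cong_trans x y z : congb x y -> congb y z -> congb x z.
Proof.
move=> /congP h1 /congP h2; apply/congP.
by have := PkD h1 h2; rewrite addrA subrK.
Qed.

Lemma cong_refl x : congb x x.
Proof. by apply/congP; rewrite subrr; left. Qed.

Fixpoint reduce (s : seq F) : seq F :=
  if s is a :: s' then
    (if has (congb a) (reduce s') then reduce s' else a :: reduce s')
  else [::].

Lemma reduce_sub s : {subset reduce s <= s}.
Proof.
elim: s => [//|a s IH] x /=; case: ifP => _; first by move/IH; rewrite inE orbC => ->.
by rewrite !inE => /orP[->//|/IH ->]; rewrite orbT.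
Qed.

Lemma reduce_cover s a : a \in s -> exists2 b, b \in reduce s & congb a b.
Proof.
elim: s => [//|c s IH] /=; rewrite inE => /orP[/eqP ->|aS].
  case: ifP => [/hasP[b bin cb]|_]; first by exists b.
  by exists c; rewrite ?inE ?eqxx // cong_refl.
have [b bin cb] := IH aS; case: ifP => _; first by exists b.
by exists b => //; rewrite inE bin orbT.
Qed.

Lemma reduce_uniq s : uniq (reduce s).
Proof.
elim: s => [//|a s IH] /=; case: ifP => // /negbT hn /=; rewrite IH andbT.
apply: contra hn => ain; apply/hasP; exists a => //; exact: cong_refl.
Qed.

Lemma reduce_inj s a b : a \in reduce s -> b \in reduce s -> congb a b -> a = b.
Proof.
elim: s => [//|c s IH] /=; case: ifP => [_|/negbT hn]; first exact: IH.
rewrite !inE => /orP[/eqP->|ain] /orP[/eqP->|bin] //.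
- by move=> cb; case/hasP: hn; exists b.
- by move/cong_sym => cb; case/hasP: hn; exists a.
- exact: IH.
Qed.

Lemma exists_val (pi : F) : pi != 0 -> v pi = 1 -> forall K : int, exists u, u != 0 /\ v u = K.
Proof.
move=> p0 vp.
have hp : forall m : nat, pi ^+ m != 0 /\ v (pi ^+ m) = m%:Z.
  elim=> [|m [h1 h2]]; first by rewrite expr0 oner_neq0 v1.
  rewrite exprS mulf_neq0 //; split => //; rewrite vM // vp h2.
  by rewrite -addn1 PoszD addrC.
case=> m; first by exists (pi ^+ m); apply: hp.
have [h1 h2] := hp m.+1; exists (pi ^+ m.+1)^-1; split; first by rewrite invr_eq0.
by rewrite vV // h2 NegzE.
Qed.


Lemma vprod (I : Type) (r : seq I) (f : I -> F) :
  (forall i, f i != 0) -> \prod_(i <- r) f i != 0 /\ v (\prod_(i <- r) f i) = \sum_(i <- r) v (f i).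
Proof.
move=> nz; elim/big_rec2: _ => [|i p q _ [p0 vp]]; first by rewrite oner_neq0 v1.
by rewrite mulf_neq0 // vM // vp.
Qed.

Lemma prod_est (I : Type) (r : seq I) (y : I -> F) (J : int) : 0 <= J ->
  (forall i, Pk J (y i)) ->
  Pk (J + J) (\prod_(i <- r) (1 + y i) - 1 - \sum_(i <- r) y i).
Proof.
move=> J0 hy; elim: r => [|i r IH]; first by rewrite !big_nil subrr sub0r oppr0; left.
rewrite !big_cons.
set P := \prod_(j <- r) _ in IH *; set S := \sum_(j <- r) _ in IH *.
have hS : Pk J S by apply: Pk_sum.
have -> : (1 + y i) * P - 1 - (y i + S) = (P - 1 - S) + y i * S + y i * (P - 1 - S).
  by ring.
apply: PkD; first apply: PkD => //; first exact: PkM.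
by apply: (Pk_le _ (PkM (hy i) IH)); apply: ih5.
Qed.


Section DetEst.
Variables (R : realType) (m : nat).
Local Notation n := m.+1.

Lemma intr_sumR (I : Type) (r : seq I) (f : I -> int) :
  (\sum_(i <- r) f i)%:~R = \sum_(i <- r) ((f i)%:~R : R).
Proof.
elim/big_rec2: _ => [|i x y _ <-]; first by [].
by rewrite intrD.
Qed.

Lemma sign_Pk0 (b : bool) : Pk 0 ((-1) ^+ b : F).
Proof. by right; case: b; rewrite ?expr0 ?expr1 ?v1 ?vN1. Qed.

Lemma moved_two (s : {perm 'I_n}) (t : R) : 0 <= t -> s != 1%g ->
  t *+ 2 <= \sum_i (if s i == i then 0 else t).
Proof.
move=> t0 s1.
have [i0 hi0] : exists i0, s i0 != i0.
  apply/existsP; move: s1; apply: contraR; rewrite negb_exists => /forallP h.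
  apply/eqP/permP => i; rewrite perm1; exact/eqP/negPn/h.
have hj0 : s (s i0) != s i0 by apply: contra hi0 => /eqP /perm_inj ->.
rewrite (bigD1 i0) //= (negbTE hi0) (bigD1 (s i0)) //= (negbTE hj0).
rewrite mulr2n addrA lerDl; apply: sumr_ge0 => i _; by case: ifP.
Qed.

Lemma det_est (a : 'I_n -> R) (t : R) (N : int) (Y : 'M[F]_n) :
  0 <= t ->
  (forall i j, Y i j = 0 \/ a j + t <= (v (Y i j))%:~R + a i) ->
  (forall z : int, t *+ 2 <= z%:~R -> N <= z) ->
  Pk N (\det (1%:M + Y) - \prod_i (1 + Y i i)).
Proof.
move=> t0 hY hN.
rewrite /determinant (bigD1 1%g) //= odd_perm1 expr0 mul1r.
under eq_bigr do rewrite perm1 !mxE eqxx.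
rewrite addrC addrK; apply: Pk_sum => s s1.
rewrite -[N]add0r; apply: PkM; first exact: sign_Pk0.
pose f i := (1%:M + Y) i (s i).
case: (boolP [forall i, f i != 0]) => [/forallP nz|]; last first.
  rewrite negb_forall => /existsP[i /negPn/eqP fi0].
  by left; rewrite (bigD1 i) //=; move: fi0; rewrite /f => ->; rewrite mul0r.
have [_ vp] := vprod (index_enum _) nz.
right; rewrite /f in vp *; rewrite vp; apply: hN.
rewrite intr_sumR.
have lb : forall i, (if s i == i then 0 else t) + (a (s i) - a i) <= (v (f i))%:~R.
  move=> i; rewrite /f !mxE; case: (eqVneq (s i) i) => [e|ne].
    rewrite e subrr addr0 /= ler0z; have fi := nz i; rewrite /f !mxE e eqxx in fi.
    apply: (Pk_nz fi).
    apply: PkD; first by right; rewrite v1.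
    case: (hY i i) => [->|h]; first by left.
    right; rewrite -(ler_int R); apply: le_trans t0 _.
    by rewrite -(lerD2r (a i)) [t + _]addrC.
  have f0 := nz i; rewrite /f !mxE [i == _]eq_sym (negbTE ne) add0r in f0; rewrite add0r.
  case: (hY i (s i)) => [e|h]; first by move: f0; rewrite e eqxx.
  by rewrite addrA lerBlDr addrC.
apply: le_trans (moved_two t0 s1) _.
apply: le_trans (ler_sum _ (fun i _ => lb i)).
rewrite big_split /= sumrB.
have -> : \sum_i a (s i) = \sum_i a i by rewrite [RHS](reindex_inj (@perm_inj _ s)).
by rewrite subrr addr0.
Qed.

End DetEst.

Section Dual.

Variables (C : numFieldType) (psi : F -> C).
Hypothesis psiD : forall x y, psi (x + y) = psi x * psi y.
Hypothesis psi_nz : forall x, psi x != 0.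
Hypothesis psiP : forall x, Pk 1 x -> psi x = 1.
Hypothesis psint : exists x, Pk 0 x /\ psi x != 1.
Variable s : seq F.
Hypothesis sO : forall a, a \in s -> Pk 0 a.
Hypothesis scov : forall x, Pk 0 x -> exists2 a, a \in s & Pk 1 (x - a).

Lemma psi0 : psi 0 = 1.
Proof. by apply: psiP; left. Qed.

Lemma psiN x : psi (- x) * psi x = 1.
Proof. by rewrite -psiD addNr psi0. Qed.

Local Notation T := (reduce s).

Lemma TO a : a \in T -> Pk 0 a.
Proof. by move/reduce_sub/sO. Qed.

Lemma Tcov x : Pk 0 x -> has (congb x) T.
Proof.
move=> /scov[a ain /congP ca]; have [b bin cab] := reduce_cover ain.
by apply/hasP; exists b => //; apply: (@cong_trans _ a) => //; exact/congP.
Qed.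

Definition rep x := nth 0 T (find (congb x) T).

Lemma rep_in x : Pk 0 x -> rep x \in T.
Proof. by move/Tcov => h; rewrite /rep mem_nth // -has_find. Qed.

Lemma rep_cong x : Pk 0 x -> congb x (rep x).
Proof. by move/Tcov => h; exact: nth_find. Qed.

Lemma Pk01 x : Pk 1 x -> Pk 0 x.
Proof. by apply: Pk_le. Qed.

Lemma sum_shift (f : F -> C) y :
  (forall a b, Pk 0 a -> Pk 0 b -> Pk 1 (a - b) -> f a = f b) -> Pk 0 y ->
  \sum_(a <- T) f (a + y) = \sum_(a <- T) f a.
Proof.
move=> fper yO; pose sg a := rep (a + y).
have aO : forall a, a \in T -> Pk 0 (a + y).
  by move=> a /TO aO; rewrite -[0]addr0; apply: PkD.
rewrite (eq_big_seq (fun a => f (sg a))); last first.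
  move=> a aT; apply: fper; [exact: aO|exact/TO/rep_in/aO|].
  exact/congP/rep_cong/aO.
rewrite -(big_map sg xpredT f); apply: perm_big.
have injs : {in T &, injective sg}.
  move=> a b aT bT e; apply: (reduce_inj aT bT).
  have h1 := rep_cong (aO _ aT); have h2 := rep_cong (aO _ bT).
  rewrite /sg in e; rewrite e in h1.
  have := cong_trans h1 (cong_sym h2); move/congP.
  by rewrite opprD addrACA subrr addr0 => h; apply/congP.
have usg : uniq (map sg T) by rewrite map_inj_in_uniq // reduce_uniq.
have sub : {subset map sg T <= T} by move=> b /mapP[a aT ->]; apply/rep_in/aO.
have eqi : map sg T =i T.
  by have [] := uniq_min_size usg sub; rewrite ?size_map.
by apply: uniq_perm => //; apply: reduce_uniq.
Qed.

Lemma sum_orth (h : F -> C) :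
  (forall a b, Pk 0 a -> Pk 0 b -> h (a + b) = h a * h b) ->
  (forall a, Pk 1 a -> h a = 1) ->
  forall y, Pk 0 y -> h y != 1 -> \sum_(a <- T) h a = 0.
Proof.
move=> hD hP y yO hy.
have hper : forall a b, Pk 0 a -> Pk 0 b -> Pk 1 (a - b) -> h a = h b.
  move=> a b aO bO ab; have abO := Pk01 ab.
  by rewrite -(subrK b a) (hD _ _ abO bO) (hP _ ab) mul1r.
have := @sum_shift h y hper yO.
rewrite (eq_big_seq (fun a => h a * h y)); last by move=> a /TO aO; rewrite hD.
rewrite -mulr_suml => /eqP; rewrite -subr_eq0 -{2}[\sum_(a <- T) h a]mulr1 -mulrBr.
by rewrite mulf_eq0 subr_eq0 (negbTE hy) orbF => /eqP.
Qed.


Lemma sum_ones (r : seq F) : \sum_(a <- r) (1 : C) = (size r)%:R.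
Proof. by elim: r => [|a r IH]; rewrite ?big_nil // big_cons IH /= -addn1 natrD addrC. Qed.

Lemma sum_ifnat (r : seq F) (p : pred F) (N : nat) :
  \sum_(a <- r) (if p a then (N%:R : C) else 0) = (N * count p r)%:R.
Proof.
elim: r => [|a r IH]; first by rewrite big_nil muln0.
rewrite big_cons IH /= mulnDr natrD; case: (p a) => /=; by rewrite ?muln1 ?muln0 ?add0r.
Qed.

Lemma unit_val x : Pk 0 x -> ~ Pk 1 x -> x != 0 /\ v x = 0.
Proof.
case=> [->|h] hn; first by case: hn; left.
have x0 : x != 0 by apply/eqP => e; apply: hn; left.
split => //; apply/eqP; rewrite eq_le h andbT leNgt; apply/negP => h1; apply: hn; right.
exact: h1.
Qed.

Lemma res_dual (eta : F -> C) :
  (forall a b, Pk 0 a -> Pk 0 b -> eta (a + b) = eta a * eta b) ->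
  (forall a, Pk 1 a -> eta a = 1) ->
  exists c, Pk 0 c /\ forall x, Pk 0 x -> eta x = psi (c * x).
Proof.
move=> etaD etaP.
pose S c := \sum_(x <- T) eta x * psi (- (c * x)).
have inner : forall x, x \in T ->
    \sum_(c <- T) psi (- (c * x)) = if congb x 0 then (size T)%:R else 0.
  move=> x xT; have xO := TO xT; case: ifP => [/congP|/negbT/congP]; rewrite subr0 => xP.
    rewrite -sum_ones; apply: eq_big_seq => c /TO cO; apply: psiP; apply: PkN.
    by rewrite -[1]add0r; apply: PkM.
  have [x0 vx] := unit_val xO xP.
  case: psint => z [zO pz].
  have z0 : z != 0 by apply: contraNneq pz => ->; rewrite psi0.
  eapply sum_orth with (h := fun c => psi (- (c * x))) (y := - z / x).
  - by move=> a b _ _; rewrite mulrDl opprD psiD.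
  - move=> a aP; apply: psiP; apply: PkN; rewrite -[1]addr0; apply: PkM => //.
  - right; rewrite vM ?mulf_neq0 ?oppr_eq0 ?invr_eq0 // vN vV // vx oppr0 addr0.
    by apply: Pk_nz zO.
  - by rewrite mulfVK // opprK.
have total : \sum_(c <- T) S c != 0.
  rewrite /S exchange_big /=.
  rewrite (eq_big_seq (fun x => if congb x 0 then (size T)%:R else 0)); last first.
    move=> x xT; rewrite -mulr_sumr inner //; case: ifP => [/congP|_]; last by rewrite mulr0.
    by rewrite subr0 => xP; rewrite etaP // mul1r.
  rewrite sum_ifnat pnatr_eq0 muln_eq0 negb_or -!lt0n -has_count.
  have := Tcov (Pk0 0); case/hasP => b bT c0b.
  apply/andP; split; first by case: (T) bT.
  by apply/hasP; exists b => //; apply: cong_sym.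
have [c cT Sc] : exists2 c, c \in T & S c != 0.
  case: (boolP (has (fun c => S c != 0) T)) => [/hasP[c ? ?]|hn]; first by exists c.
  case/negP: total; apply/eqP; apply: big1_seq => c /andP[_ cT].
  by apply/eqP; apply: contraNT hn => h; apply/hasP; exists c.
have cO := TO cT; exists c; split => // y yO.
have hy : eta y * psi (- (c * y)) = 1.
  case: (eqVneq (eta y * psi (- (c * y))) 1) => // hne.
  case/negP: Sc; apply/eqP; eapply sum_orth with (h := fun x => eta x * psi (- (c * x))) (y := y); [| |exact: yO|exact: hne].
  - move=> a b aO bO; rewrite etaD // mulrDr opprD psiD.
    by rewrite mulrACA.
  - move=> a aP; rewrite etaP // mul1r; apply: psiP; apply: PkN.
    by rewrite -[1]add0r; apply: PkM.
by rewrite -[LHS]mulr1 -(psiN (c * y)) mulrA hy mul1r.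
Qed.


Lemma layer_dual (pi : F) (theta : F -> C) (J M : int) :
  pi != 0 -> v pi = 1 -> J <= M ->
  (forall a b, Pk J a -> Pk J b -> theta (a + b) = theta a * theta b) ->
  (forall a, Pk M a -> theta a = 1) ->
  exists beta, Pk (1 - M) beta /\ forall a, Pk J a -> theta a = psi (beta * a).
Proof.
move=> p0 vp JM thD thM.
suff H : forall d : nat, J <= M - d%:Z -> exists beta, Pk (1 - M) beta /\
    forall a, Pk (M - d%:Z) a -> theta a = psi (beta * a).
  by have := H `|M - J|%N; rewrite ih4 //; apply.
elim=> [|d IH] hd.
  exists 0; split; first by left.
  by move=> a; rewrite subr0 mul0r psi0 => /thM.
have [beta [bP hb]] := IH (ih1 hd).
set K := M - d.+1%:Z in hd *.
have [u [u0 vu]] := exists_val p0 vp K.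
have uK : Pk K u by right; rewrite vu.
have uJ : forall x, Pk 0 x -> Pk J (u * x).
  move=> x xO; apply: (Pk_le hd); rewrite -[K]addr0; exact: PkM.
pose eta x := theta (u * x) * psi (- (beta * (u * x))).
have [c [cO hc]] : exists c, Pk 0 c /\ forall x, Pk 0 x -> eta x = psi (c * x).
  apply: res_dual.
  - move=> a b aO bO; rewrite /eta (mulrDr u) thD; [|exact: uJ|exact: uJ].
    rewrite (mulrDr beta) opprD psiD.
    by rewrite mulrACA.
  - move=> a aP; rewrite /eta hb; first by rewrite mulrC psiN.
    by rewrite -ih2; apply: PkM.
exists (beta + c / u); split.
  apply: PkD => //; apply: (Pk_le (ih3 M d)); rewrite -[- K]add0r.
  by apply: PkM => //; right; rewrite vV // vu.
move=> a aK.
have xO : Pk 0 (a / u).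
  by rewrite -(subrr K); apply: PkM => //; right; rewrite vV // vu.
have ea : a = u * (a / u) by rewrite mulrC mulfVK.
have := hc _ xO; rewrite /eta -ea => e.
have : theta a = eta (a / u) * psi (beta * a).
  by rewrite /eta -ea -mulrA psiN mulr1.
rewrite hc // -psiD => ->; congr psi.
by rewrite mulrDl addrC mulrAC mulrA.
Qed.

End Dual.

Lemma onePk_nz z : Pk 1 z -> 1 + z != 0.
Proof.
move=> hz; apply/negP => /eqP e.
have ez : z = -1 by rewrite -(addKr 1 z) e addr0.
move: hz; rewrite ez => -[/eqP|]; first by rewrite oppr_eq0 oner_eq0.
by rewrite vN1.
Qed.

Lemma inv_onePk z : Pk 1 z -> Pk 0 (1 + z)^-1.
Proof.
move=> hz; have nz := onePk_nz hz.
have h0 : Pk 0 (1 + z).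
  apply: PkD; first by right; rewrite v1.
  exact: (Pk_le _ hz).
right; rewrite vV // oppr_ge0.
have := Pk_nz nz h0; rewrite le_eqVlt => /orP[/eqP <-//|h1].
exfalso; have : Pk 1 ((1 + z) - z) by apply: PkB => //; right.
rewrite addrK => -[/eqP|]; first by rewrite oner_eq0.
by rewrite v1.
Qed.

Lemma chi_shift (C : fieldType) (chi : F -> C) (M : int) :
  (forall c d, c != 0 -> d != 0 -> chi (c * d) = chi c * chi d) ->
  (forall e, Pk M e -> chi (1 + e) = 1) -> 1 <= M ->
  forall z e, Pk 1 z -> Pk M e -> chi (1 + z + e) = chi (1 + z).
Proof.
move=> chM chP M1 z e hz he.
have w0 := onePk_nz hz; have wi := inv_onePk hz.
have e1 : Pk M (e / (1 + z)) by rewrite -[M]addr0; apply: PkM.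
have -> : 1 + z + e = (1 + z) * (1 + e / (1 + z)).
  by rewrite mulrDr mulr1 mulrCA mulfV // mulr1.
rewrite chM // ?(chP _ e1) ?mulr1 //; apply: onePk_nz; exact: (Pk_le M1 e1).
Qed.

Section Build.
Variables (R : realType) (m : nat).
Local Notation n := m.+1.

Lemma coord_bound (x : bpoint F n R) (t : R) (Y : 'M[F]_n) : is_bpoint x -> mp_lie v x t Y ->
  forall i j, (invmx (bbasis x) *m Y *m bbasis x) i j = 0 \/
   bcoord x j + t <= (v ((invmx (bbasis x) *m Y *m bbasis x) i j))%:~R + bcoord x i.
Proof.
move=> xb hY i j.
have L : lattice v x (bcoord x j) (bbasis x *m delta_mx j 0).
  move=> k /=; rewrite mulKmx // mxE; case: (eqVneq k j) => [->|kj].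
    by right; rewrite eqxx /= v1 add0r.
  by left.
have := hY _ _ L i; rewrite /= !mulmxA -colE mxE.
by rewrite addrC.
Qed.

Lemma diag_lie (x0 : bpoint F n R) (u : F) (M : int) : is_bpoint x0 -> Pk M (u - 1) ->
  mp_lie v x0 M%:~R (bbasis x0 *m Dg 0 u *m invmx (bbasis x0) - 1).
Proof.
move=> xb hu s w L c i; rewrite {}/c.
have -> : invmx (bbasis x0) *m ((bbasis x0 *m Dg 0 u *m invmx (bbasis x0) - 1) *m w) = (Dg 0 u - 1%:M) *m (invmx (bbasis x0) *m w).
  rewrite !mulmxBl !mulmxBr -!mulmxA mulKmx //.
  by rewrite [1 *m _]mul1mx mul1mx.
have -> : (Dg 0 u - 1%:M : 'M[F]_n) = diag_mx (\row_k (if k == 0 then u - 1 else 0)).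
  apply/matrixP => k l; rewrite !mxE; case: (eqVneq k l) => [->|kl].
    by case: ifP; rewrite /= ?mulr1n ?subrr.
  by rewrite !mulr0n subrr.
have Li := L i; move: Li; rewrite /=; set c := invmx (bbasis x0) *m w => Li.
rewrite mul_diag_mx mxE [X in X * _]mxE -/c.
case: (eqVneq i 0) => [ei|ni]; last by left; rewrite mul0r.
case: Li => [->|h]; first by left; rewrite mulr0.
case: (eqVneq (u - 1) 0) => [->|u0]; first by left; rewrite mul0r.
case: (eqVneq (c i 0) 0) => [->|c0]; first by left; rewrite mulr0.
right; rewrite vM // intrD addrAC [s + _]addrC -addrA lerD //.
  by rewrite ler_int (Pk_nz u0 hu).
by rewrite addrC.
Qed.

End Build.

End Val.


Lemma ltz_le1 (a b : int) : a < b -> a + 1 <= b.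
Proof. lia. Qed.

Section Floors.
Variables (R : realType) (r : R).

Lemma fl_J1 : 0 < r -> 1 <= Num.floor (r / 2) + 1.
Proof.
move=> r0; have : 0 <= Num.floor (r / 2) by rewrite floor_ge0; lra.
move=> h; lia.
Qed.

Lemma fl_JM : 0 < r -> Num.floor (r / 2) + 1 <= Num.floor r + 1.
Proof. by move=> r0; rewrite lerD2r; apply: le_floor; lra. Qed.

Lemma fl_lt : r < (Num.floor r + 1)%:~R.
Proof. exact: floorD1_gt. Qed.

Lemma fl_s (z : int) (s : R) : r < s -> s <= z%:~R -> Num.floor r + 1 <= z.
Proof.
move=> rs sz; apply: ltz_le1; rewrite floor_lt_int; exact: lt_le_trans rs sz.
Qed.

Lemma fl_diag (z : int) (t : R) : r / 2 < t -> t <= z%:~R -> Num.floor (r / 2) + 1 <= z.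
Proof.
move=> rs sz; apply: ltz_le1; rewrite floor_lt_int; exact: lt_le_trans rs sz.
Qed.

Lemma fl_det (z : int) (t : R) : r / 2 < t -> t *+ 2 <= z%:~R -> Num.floor r + 1 <= z.
Proof.
move=> rt tz; apply: (@fl_s z (t *+ 2)) => //; rewrite mulr2n; lra.
Qed.

Lemma fl_MJJ : Num.floor r + 1 <= (Num.floor (r / 2) + 1) + (Num.floor (r / 2) + 1).
Proof.
apply: ltz_le1; rewrite floor_lt_int intrD.
have := floorD1_gt (r / 2); lra.
Qed.

End Floors.

Unset Implicit Arguments.

Theorem lemma2p50 (F : fieldType) (v : F -> int) (R : realType)
  (psi : F -> R[i]) (n : nat) (phi : 'M[F]_n -> R[i]) (r : R) (x : bpoint F n R) :
  (2 <= n)%N ->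
  is_nonarch_local_field v ->
  is_level_one_char v psi ->
  is_hom phi ->
  has_depth v phi r -> 0 < r ->
  is_bpoint x ->
  exists beta : F,
    in_gstar v (- r) (@zstar F n beta) /\ realizes v psi phi x r (@zstar F n beta).
Proof.
destruct n as [|m]; first by [].
move=> _ [vM [vD [pi [p0 vp]] _ [s [sO scov]] [two _]]] [psiD psi_nz psiP psint].
move=> [pnz pM] [r0 [x0 [x0b triv]] _] rpos xb.
pose M := Num.floor r + 1; pose J := Num.floor (r / 2) + 1.
have J1 : 1 <= J := fl_J1 rpos.
have JM : J <= M := fl_JM rpos.
have MJJ : M <= J + J := fl_MJJ r.
have M1 : 1 <= M := le_trans J1 JM.
have chM := chiM pM.
have chP : forall e, inPk v M e -> chi phi (1 + e) = 1.
  move=> e he.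
  have u0 : 1 + e != 0 by apply: (onePk_nz vM); exact: (Pk_le M1 he).
  set B := bbasis x0.
  have uB : B \in unitmx := x0b.
  have uD : (Dg 0 (1 + e) : 'M[F]_m.+1) \in unitmx by apply: Dg_unit.
  have ug : B *m Dg 0 (1 + e) *m invmx B \in unitmx by rewrite !unitmx_mul uB uD unitmx_inv.
  have := triv (B *m Dg 0 (1 + e) *m invmx B); rewrite phi_conj // phiDg // => -> //.
  exists M%:~R; first exact: fl_lt.
  split => //; apply: (diag_lie vM x0b); by rewrite addrC addKr.
pose theta a := chi phi (1 + a).
have thD : forall a b, inPk v J a -> inPk v J b -> theta (a + b) = theta a * theta b.
  move=> a b ha hb; rewrite /theta.
  have ha1 := Pk_le J1 ha; have hb1 := Pk_le J1 hb.
  rewrite -chM ?(onePk_nz vM) //.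
  have -> : (1 + a) * (1 + b) = 1 + (a + b) + a * b by ring.
  rewrite (chi_shift vM vD chM chP M1) //; first exact: (PkD vD).
  exact: (Pk_le MJJ (PkM vM ha hb)).
have [beta [bP hb]] := layer_dual vM vD psiD psiP psint sO scov p0 vp JM thD chP.
exists beta; split.
  exists x; split => // X [t rt hX]; rewrite opprK in rt.
  rewrite /zstar.
  have -> : \tr X = \tr (invmx (bbasis x) *m X *m bbasis x).
    by rewrite mxtrace_mulC mulmxA mulmxV ?mul1mx.
  rewrite /inP; apply: (@Pk_le _ _ 1 ((1 - M) + M)); first by rewrite subrK.
  apply: (PkM vM) => //; apply: (Pk_sum vD) => i _.
  case: (coord_bound vM xb hX i i) => [->|h]; first by left.
  right; apply: (fl_s rt); by rewrite -(lerD2r (bcoord x i)) addrC.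
move=> Y [t rt hY].
set B := bbasis x.
set Y' := invmx B *m Y *m B.
have hbd := coord_bound vM xb hY.
have t0 : 0 < t by apply: lt_trans rt; rewrite divr_gt0.
have hdiag : forall i, inPk v J (Y' i i).
  move=> i; case: (hbd i i) => [->|h]; first by left.
  right; apply: (fl_diag rt); by rewrite -(lerD2r (bcoord x i)) addrC.
have J0 : 0 <= J by apply: le_trans J1.
have hdet := det_est vM vD (ltW t0) hbd (fun z hz => fl_det rt hz) : inPk v M _.
have hprod := prod_est vM vD (index_enum 'I_m.+1) (y := fun i => Y' i i) J0 hdiag.
set T := \tr Y'.
have hT : inPk v J T by apply: (Pk_sum vD) => i _.
have hT1 := Pk_le J1 hT.
set e := (\det (1%:M + Y') - \prod_i (1 + Y' i i)) + (\prod_i (1 + Y' i i) - 1 - T).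
have he : inPk v M e.
  apply: (PkD vD) => //; exact: (Pk_le MJJ hprod).
have hdetE : \det (1%:M + Y') = 1 + T + e by rewrite /e; ring.
have u1 : (1%:M + Y') \in unitmx.
  rewrite unitmxE unitfE hdetE -addrA; apply: (onePk_nz vM).
  by apply: (PkD vD) => //; exact: (Pk_le M1 he).
have eq1 : 1 + Y = B *m (1%:M + Y') *m invmx B.
  by rewrite mulmxDr mulmx1 mulmxDl mulmxV // /Y' !mulmxA mulmxV // mul1mx -mulmxA mulmxV // mulmx1.
rewrite /zstar eq1 phi_conj // phi_det // hdetE (chi_shift vM vD chM chP M1) //.
rewrite -/(theta T) hb //.
have -> : \tr Y = T by rewrite /T /Y' mxtrace_mulC mulmxA mulmxV ?mul1mx.
by [].
Qed.
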